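(* Let the genus function $g$ satisfy $g(n)\to\infty$ and $g(n)/n\to0$ as $n\to\infty$, and suppose there is $n_0$ such that for $n\ge n_0$, $g(n)$ is non-decreasing and $g(n)/n$ is non-increasing. Then $|\mathrm{Hered}(\mathcal F^g)_n| \ge n!\, g^{(1+o(1))g/2}$, where $g=g(n)$.
   Context: Graphs are finite and simple; $\mathcal B_n$ is the set of graphs in a class $\mathcal B$ on vertex set $[n]$. A genus function is $g:\mathbb N\to\mathbb N_0$. $\mathcal F^g$ is the class of graphs $G$ such that, if $G$ has $n$ vertices, every cellular embedding of $G$ has Euler genus at most $g(n)$; equivalently the cycle rank $e(G)-v(G)+\kappa(G)\le g(n)$, $\kappa(G)$ the number of components. $\mathrm{Hered}(\mathcal B)$ is the class of graphs $G$ with $G[W]\in\mathcal B$ for every nonempty $W\subseteq V(G)$. Asymptotics as $n\to\infty$. *)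

(* Defs.v *)
From HB Require Import structures.
From mathcomp Require Import all_boot all_order all_algebra.
From mathcomp Require Import all_classical all_reals all_analysis.
Set Implicit Arguments. Unset Strict Implicit. Unset Printing Implicit Defensive.
Import Order.TTheory GRing.Theory Num.Theory.

Definition simple_graph (n : nat) (E : {set {set 'I_n}}) : bool :=
  [forall e in E, #|e| == 2].

Definition ind_adj (n : nat) (E : {set {set 'I_n}}) (W : {set 'I_n}) : rel 'I_n :=
  fun x y => [&& x \in W, y \in W & [set x; y] \in E].

Definition ind_edges (n : nat) (E : {set {set 'I_n}}) (W : {set 'I_n}) : nat :=
  #|[set e in E | e \subset W]|.

Definition ind_comps (n : nat) (E : {set {set 'I_n}}) (W : {set 'I_n}) : nat :=
  n_comp (ind_adj E W) (mem W).

(* G[W] belongs to F^g: its cycle rank e - v + kappa is at most g(v),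
   where v = |W|. Written additively to avoid truncated subtraction. *)
Definition in_Fg (g : nat -> nat) (n : nat) (E : {set {set 'I_n}})
    (W : {set 'I_n}) : bool :=
  ind_edges E W + ind_comps E W <= g #|W| + #|W|.

Definition in_Hered_Fg (g : nat -> nat) (n : nat) (E : {set {set 'I_n}}) : bool :=
  [forall W : {set 'I_n}, (0 < #|W|) ==> in_Fg g E W].

Definition hered_Fg_count (g : nat -> nat) (n : nat) : nat :=
  #|[set E : {set {set 'I_n}} | simple_graph E && in_Hered_Fg g E]|.

(* Main.v *)
Require Import Defs.
From HB Require Import structures.
From mathcomp Require Import all_boot all_order all_algebra.
From mathcomp Require Import all_classical all_reals all_analysis.
From mathcomp Require Import perm zify ring lra.
Import Order.TTheory GRing.Theory Num.Theory.
Import numFieldNormedType.Exports.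

Set Implicit Arguments. Unset Strict Implicit. Unset Printing Implicit Defensive.

Lemma set2_eqP (T : finType) (x y u v : T) :
  [set x; y] = [set u; v] -> (x = u /\ y = v) \/ (x = v /\ y = u).
Proof.
move=> E.
have hx : x \in [set u; v] by rewrite -E !inE eqxx.
have hy : y \in [set u; v] by rewrite -E !inE eqxx orbT.
have hu : u \in [set x; y] by rewrite E !inE eqxx.
have hv : v \in [set x; y] by rewrite E !inE eqxx orbT.
move: hx hy hu hv; rewrite !inE.
by case/orP=> /eqP-> ; case/orP=> /eqP-> ; case/orP=> /eqP ?; case/orP=> /eqP ?;
  subst; auto.
Qed.

Section Constr.
Variables (m l q : nat).
Local Notation N := m.+1.
Hypothesis hl : 2 <= l.
Hypothesis hn : 2 * q * l + 2 <= N.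

Definition sp (j : nat) : nat := j.+1 * l.

Definition chordb (pi : {perm 'I_q}) (a b : nat) : bool :=
  [exists i : 'I_q, (a == sp i) && (b == sp (q + pi i))].

Definition Hn (pi : {perm 'I_q}) (a b : nat) : bool := (b == a.+1) || chordb pi a b.

Definition Egraph (s : {perm 'I_N}) (pi : {perm 'I_q}) : {set {set 'I_N}} :=
  [set [set s x.1; s x.2] | x in [set x : 'I_N * 'I_N | Hn pi x.1 x.2]].

Lemma l_gt0 : 0 < l. Proof. lia. Qed.

Lemma sp_lt j : j < 2 * q -> sp j < m.
Proof.
rewrite /sp => hj.
have : j.+1 * l <= 2 * q * l by rewrite leq_mul2r hj orbT.
lia.
Qed.

Lemma sp_inj : injective sp.
Proof. by move=> a b; rewrite /sp => /eqP; rewrite eqn_mul2r eqSS; case: l hl => // l' _ /eqP. Qed.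

Lemma sp_ltl a b : a < b -> sp a + l <= sp b.
Proof. rewrite /sp => h; have : a.+2 * l <= b.+1 * l by rewrite leq_mul2r ltnS h orbT. by rewrite mulSn; lia. Qed.

Lemma sp_ge j : l <= sp j.
Proof. by rewrite /sp mulSn leq_addr. Qed.

Lemma sp_not_succ a b : sp b != (sp a).+1.
Proof.
apply/eqP=> E.
have: (sp b) %% l = 0 by rewrite /sp modnMl.
rewrite E /sp -addn1 modnMDl modn_small; [by [] | lia].
Qed.

Lemma Hn_lt pi a b : Hn pi a b -> a < b.
Proof.
case/orP => [/eqP -> //|/existsP [i /andP [/eqP -> /eqP ->]]].
have : sp i + l <= sp (q + pi i) by apply: sp_ltl; have := ltn_ord i; lia.
have := l_gt0; lia.
Qed.

Lemma chord_sp pi a b : chordb pi a b -> exists2 k, k < 2 * q & a = sp k.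
Proof. by case/existsP=> i /andP [/eqP -> _]; exists i => //; have := ltn_ord i; lia. Qed.

Lemma chord_sp2 pi a b : chordb pi a b -> exists2 k, k < 2 * q & b = sp k.
Proof. by case/existsP=> i /andP [_ /eqP ->]; exists (q + pi i) => //; have := ltn_ord (pi i); lia. Qed.

Lemma EgraphP (s : {perm 'I_N}) pi e : e \in Egraph s pi ->
  exists a b : 'I_N, [/\ Hn pi a b & e = [set s a; s b]].
Proof. by case/imsetP=> [[a b]]; rewrite inE /= => H ->; exists a, b. Qed.

Lemma Egraph_in (s : {perm 'I_N}) pi (a b : 'I_N) : Hn pi a b -> [set s a; s b] \in Egraph s pi.
Proof. by move=> H; apply/imsetP; exists (a, b); rewrite // inE. Qed.

Lemma Egraph_simple (s : {perm 'I_N}) pi : simple_graph (Egraph s pi).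
Proof.
apply/forall_inP => e /EgraphP [a [b [H ->]]].
rewrite cards2 (inj_eq perm_inj); move: (Hn_lt H).
by case: (a =P b) => [->|]; rewrite ?ltnn.
Qed.


Lemma edge_nat (s : {perm 'I_N}) pi (c : nat) : c.+1 < N ->
  [set s (inord c); s (inord c.+1)] \in Egraph s pi.
Proof.
move=> hc; apply: Egraph_in; rewrite /Hn !inordK //; last by lia.
by rewrite eqxx.
Qed.

Lemma nonsp_nbr (t : {perm 'I_N}) rho (p w : 'I_N) :
  (forall k, k < 2 * q -> (p : nat) != sp k) -> [set t p; w] \in Egraph t rho ->
  exists a : 'I_N, w = t a /\ ((a.+1 == p :> nat) || (nat_of_ord a == p.+1)).
Proof.
move=> hp /EgraphP [a [b [H E]]].
case: (set2_eqP E) => [[/perm_inj ea ->]|[/perm_inj eb ->]].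
- exists b; split => //; move: H; rewrite /Hn -ea; case/orP=> [->|]; first by rewrite orbT.
  by case/chord_sp => k hk ek; move: (hp k hk); rewrite ek eqxx.
- exists a; split => //; move: H; rewrite /Hn -eb; case/orP=> [/eqP ->|]; first by rewrite eqxx.
  by case/chord_sp2 => k hk ek; move: (hp k hk); rewrite ek eqxx.
Qed.

Lemma nonsp_nbr' (t : {perm 'I_N}) rho (p w : 'I_N) :
  (forall k, k < 2 * q -> (p : nat) != sp k) -> [set w; t p] \in Egraph t rho ->
  exists a : 'I_N, w = t a /\ ((a.+1 == p :> nat) || (nat_of_ord a == p.+1)).
Proof. by rewrite finset.setUC; apply: nonsp_nbr. Qed.

Lemma fiber_eq (s t : {perm 'I_N}) pi rho :
  Egraph s pi = Egraph t rho -> s ord0 = t ord0 -> s = t.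
Proof.
move=> EE h0.
suff H : forall i (j : 'I_N), j <= i -> s j = t j.
  by apply/permP; exact: (fun x => H x x (leqnn _)).
elim=> [|i IH] j.
  by rewrite leqn0 => /eqP hj; have -> : j = ord0 by apply: val_inj.
rewrite leq_eqVlt ltnS; case/orP=> [/eqP hj|]; last exact: IH.
have hiN : i < N by have := ltn_ord j; lia.
set a : 'I_N := inord i.
have va : nat_of_ord a = i by rewrite /a inordK.
have ea : s a = t a by apply: IH; rewrite va.
have Ej : [set t a; t j] \in Egraph t rho.
  have hjN := ltn_ord j.
  have -> : j = inord i.+1 by apply: val_inj => /=; rewrite inordK; lia.
  by apply: edge_nat; lia.
rewrite -EE -ea in Ej.
set c := (s^-1)%g (t j).
have ec : t j = s c by rewrite /c permKV.
rewrite ec in Ej.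
case/EgraphP: Ej => a' [b' [H E]].
case: (set2_eqP E) => [[/perm_inj eaa /perm_inj ecb]|[/perm_inj eab /perm_inj eca]].
-
  rewrite -eaa -ecb in H.
  case/orP: H => [/eqP hc|hch].
    by rewrite ec; congr (s _); apply: val_inj => /=; rewrite hc va hj.
  have hlt := Hn_lt (introT orP (or_intror hch) : Hn pi a c).
  case: (chord_sp hch) => k hk eak.
  case: (chord_sp2 hch) => k' hk' eck.
  have cm : c < m by rewrite eck; apply: sp_lt.
  have cl : l <= c by rewrite eck sp_ge.
  have jns : forall k0, k0 < 2 * q -> (j : nat) != sp k0.
    by move=> k0 _; rewrite hj -va eak eq_sym sp_not_succ.
  have Em : [set t j; s (inord c.-1)] \in Egraph t rho.
    rewrite -EE finset.setUC ec; apply: Egraph_in; apply/orP; left; apply/eqP.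
    by rewrite inordK; lia.
  have Ep : [set t j; s (inord c.+1)] \in Egraph t rho.
    rewrite -EE ec; apply: Egraph_in; apply/orP; left; apply/eqP.
    by rewrite inordK; lia.
  case: (nonsp_nbr jns Em) => x [ex hx].
  case: (nonsp_nbr jns Ep) => y [ey hy].
  case/orP: hx => [hx|hx].
    have : x = a by apply: val_inj => /=; rewrite va; lia.
    move=> exa; rewrite exa -ea in ex; move/perm_inj: ex => /(congr1 (@nat_of_ord _)).
    rewrite inordK; last by lia.
    by move=> h; rewrite ec; congr (s _); apply: val_inj => /=; lia.
  case/orP: hy => [hy|hy].
    have : y = a by apply: val_inj => /=; rewrite va; lia.
    move=> eya; rewrite eya -ea in ey; move/perm_inj: ey => /(congr1 (@nat_of_ord _)).
    by rewrite inordK; lia.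
  have : x = y by apply: val_inj => /=; lia.
  move=> exy; rewrite -exy -ex in ey; move/perm_inj: ey => /(congr1 (@nat_of_ord _)).
  by rewrite !inordK; lia.
-
  rewrite -eab -eca in H.
  have hlt := Hn_lt H.
  have : s c = t c by apply: IH; rewrite va in hlt; lia.
  rewrite -ec => /perm_inj /(congr1 (@nat_of_ord _)); rewrite hj; rewrite va in hlt; lia.
Qed.


Lemma endpoint (s t : {perm 'I_N}) pi rho :
  Egraph s pi = Egraph t rho -> t ord0 = s ord0 \/ t ord0 = s ord_max.
Proof.
move=> EE.
set c := (s^-1)%g (t ord0).
have ec : t ord0 = s c by rewrite /c permKV.
have hcN := ltn_ord c.
case: (posnP c) => [c0|cpos].
  by left; rewrite ec; congr (s _); apply: val_inj => /=; rewrite c0.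
have [cm|cm] : c < m \/ nat_of_ord c = m by lia.
  2: by right; rewrite ec; congr (s _); apply: val_inj => /=; rewrite cm.
have ns : forall k, k < 2 * q -> (@ord0 m : nat) != sp k.
  by move=> k _; have := sp_ge k; rewrite /=; case: (sp k) => //; lia.
have Em : [set t ord0; s (inord c.-1)] \in Egraph t rho.
  rewrite -EE finset.setUC ec; apply: Egraph_in; apply/orP; left; apply/eqP.
  by rewrite inordK; lia.
have Ep : [set t ord0; s (inord c.+1)] \in Egraph t rho.
  rewrite -EE ec; apply: Egraph_in; apply/orP; left; apply/eqP.
  by rewrite inordK; lia.
case: (nonsp_nbr ns Em) => x [ex hx].
case: (nonsp_nbr ns Ep) => y [ey hy].
have : x = y by apply: val_inj => /=; move: hx hy => /=; lia.
move=> exy; rewrite -exy -ex in ey; move/perm_inj: ey => /(congr1 (@nat_of_ord _)).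
by rewrite !inordK; lia.
Qed.

Lemma chord_edge (s : {perm 'I_N}) (pi : {perm 'I_q}) (i : 'I_q) :
  [set s (inord (sp i)); s (inord (sp (q + pi i)))] \in Egraph s pi.
Proof.
have hi := ltn_ord i; have hpi := ltn_ord (pi i).
apply: Egraph_in; apply/orP; right; apply/existsP; exists i.
rewrite !inordK ?eqxx //.
  by have := @sp_lt (q + pi i); lia.
by have := @sp_lt i; lia.
Qed.

Lemma chord_eq (s : {perm 'I_N}) (pi rho : {perm 'I_q}) : Egraph s pi = Egraph s rho -> pi = rho.
Proof.
move=> EE; apply/permP => i.
have hi := ltn_ord i; have hpi := ltn_ord (pi i).
have h1 := @sp_lt i; have h2 := @sp_lt (q + pi i).
have hlt : sp i + l <= sp (q + pi i) by apply: sp_ltl; lia.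
have := chord_edge s pi i; rewrite EE => /EgraphP [a [b [H E]]].
case: (set2_eqP E) => [[/perm_inj ea /perm_inj eb]|[/perm_inj ea /perm_inj eb]].
- move: H; rewrite -ea -eb /Hn !inordK; try lia.
  case/orP=> [/eqP h|]; first by move: (sp_not_succ i (q + pi i)); rewrite h eqxx.
  case/existsP => k /andP [/eqP /sp_inj ik /eqP /sp_inj e].
  have ki : k = i by apply: val_inj => /=; rewrite ik.
  by subst k; apply: val_inj => /=; lia.
- have := Hn_lt H; rewrite -ea -eb !inordK; try lia.
Qed.

Lemma count_image :
  N`! * q`! <= 2 * #|[set Egraph x.1 x.2 | x in [set: {perm 'I_N} * {perm 'I_q}]]|.
Proof.
set F := [set Egraph x.1 x.2 | x in _].
pose x0 : {perm 'I_N} * {perm 'I_q} := (1%g, 1%g).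
pose rep G := odflt x0 [pick y | Egraph y.1 y.2 == G].
pose h (x : {perm 'I_N} * {perm 'I_q}) :=
  (Egraph x.1 x.2, x.1 ord0 == (rep (Egraph x.1 x.2)).1 ord0).
have repP x : Egraph (rep (Egraph x.1 x.2)).1 (rep (Egraph x.1 x.2)).2 = Egraph x.1 x.2.
  rewrite /rep; case: pickP => [y /eqP -> //|/(_ x)]; by rewrite eqxx.
have hinj : injective h.
  move=> [s1 p1] [s2 p2]; rewrite /h /= => [[E12 b12]].
  have Hs : s1 = s2.
    apply: (fiber_eq E12).
    set r := rep (Egraph s1 p1) in b12 *.
    have R1 : Egraph r.1 r.2 = Egraph s1 p1 by exact: (repP (s1, p1)).
    have R2 : Egraph r.1 r.2 = Egraph s2 p2 by rewrite R1.
    move: b12; rewrite -E12 -/r.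
    case: (endpoint R1) => ->; case: (endpoint R2) => ->; rewrite ?eqxx //.
    - by case: eqP.
    - by case: eqP.
  by subst s2; rewrite (chord_eq E12).
have : #|h @: [set: {perm 'I_N} * {perm 'I_q}]| <= #|finset.setX F [set: bool]|.
  apply: subset_leq_card; apply/fintype.subsetP => y /imsetP [x _ ->].
  by rewrite inE /= inE; apply/andP; split; [apply/imsetP; exists x|].
rewrite card_imset // cardsT card_prod !card_Sn cardsX cardsT card_bool.
by rewrite [#|F| * 2]mulnC.
Qed.


Section Hered.
Variables (g : nat -> nat).
Hypothesis Hgl : forall w c, 0 < c -> c * l <= w -> w <= N -> c <= g w.
Variables (s : {perm 'I_N}) (pi : {perm 'I_q}) (W : {set 'I_N}).

Let E := Egraph s pi.
Let e := ind_adj E W.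
Definition inU (p : nat) : bool := (p < N) && (s (inord p) \in W).

Fixpoint rs (p : nat) : nat :=
  if p is p'.+1 then (if inU p' then rs p' else p) else 0.

Lemma rs_le p : rs p <= p.
Proof. elim: p => //= p IH; case: ifP => // _; exact: leqW. Qed.

Lemma rs_in p k : inU p -> rs p <= k <= p -> inU k.
Proof.
elim: p k => [|p IH] k /=; first by move=> hp; rewrite leqn0 => /eqP ->.
case: ifP => hp hp1 /andP [h1 h2].
  case: (ltngtP k p.+1) => [hk||->] //; last by rewrite ltnNge h2.
  by apply: IH => //; rewrite h1 -ltnS.
by have -> : k = p.+1 by apply/eqP; rewrite eqn_leq h1 h2.
Qed.

Lemma rs_start p : (rs p == 0) || ~~ inU (rs p).-1.
Proof. elim: p => //= p IH; case: ifP => // ->; by rewrite orbT. Qed.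

Lemma inU_ord (p : 'I_N) : inU p = (s p \in W).
Proof. by rewrite /inU ltn_ord /= inord_val. Qed.

Lemma adj_succ p : inU p -> inU p.+1 -> e (s (inord p)) (s (inord p.+1)).
Proof.
move=> /andP [_ h1] /andP [h2 h3]; rewrite /e /ind_adj h1 h3 /=.
exact: edge_nat.
Qed.

Lemma rs_conn p : inU p -> connect e (s (inord (rs p))) (s (inord p)).
Proof.
elim: p => [|p IH] /=; first by rewrite connect0.
case: ifP => // hp hp1.
apply: connect_trans (IH hp) (connect1 _); exact: adj_succ.
Qed.

Lemma rs_unc p t : inU p -> t <= p -> ~~ inU (p - t) -> p < rs p + t.
Proof.
move=> hp ht hnot; rewrite ltnNge; apply/negP => h; case/negP: hnot.
apply: (rs_in hp); apply/andP; split; last exact: leq_subr.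
by rewrite leq_subRL //; rewrite addnC.
Qed.

Lemma e_sym : symmetric e.
Proof. by move=> x y; rewrite /e /ind_adj finset.setUC andbCA. Qed.

Lemma e_closed : fingraph.closed e (mem W).
Proof. by move=> x y /and3P [hx hy _]; move: hx hy; rewrite /in_mem /= => -> ->. Qed.

Definition U := [set p : 'I_N | s p \in W].
Definition D' := [set p : 'I_N | (0 < p) && inU p.-1].
Definition Bq := [set i : 'I_q | inU (sp i) && inU (sp (q + pi i))].
Definition yy (i : 'I_q) := sp (q + pi i).
Definition C0 := [set i : 'I_q | [forall t : 'I_l.+1, inU (yy i - t)]].
Definition Unc := Bq :\: C0.
Definition Cv := Bq :&: C0.
Definition II := [set (inord (rs (yy i)) : 'I_N) | i in Unc].
Definition TT := (U :\: D') :\: II.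

Lemma card_U : #|U| = #|W|.
Proof. by rewrite /U -[RHS](card_preimset W (@perm_inj _ s)); apply: eq_card => x; rewrite !inE. Qed.

Lemma yy_lt i : yy i < m.
Proof. by apply: sp_lt; have := ltn_ord (pi i); lia. Qed.

Lemma sp_i_lt (i : 'I_q) : sp i < m.
Proof. by apply: sp_lt; have := ltn_ord i; lia. Qed.

Lemma edges_bound : ind_edges E W <= #|U :&: D'| + #|Bq|.
Proof.
rewrite /ind_edges.
apply: (@leq_trans #|[set [set s (inord p.-1); s p] | p : 'I_N in U :&: D'] :|:
     [set [set s (inord (sp i)); s (inord (yy i))] | i : 'I_q in Bq]|).
  apply: subset_leq_card; apply/fintype.subsetP => x; rewrite inE => /andP [/EgraphP [a [b [H ->]]] hsub].
  have ha : s a \in W by apply: (fintype.subsetP hsub); rewrite !inE eqxx.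
  have hb : s b \in W by apply: (fintype.subsetP hsub); rewrite !inE eqxx orbT.
  have ha' : inord a = a :> 'I_N by apply: val_inj => /=; rewrite inordK.
  case/orP: H => [/eqP hb1|hch].
    apply/setUP; left; apply/imsetP; exists b.
      by rewrite !inE hb hb1 /= /inU; have := ltn_ord a; rewrite ha' ha ltn_ord.
    by have -> : inord b.-1 = a :> 'I_N by apply: val_inj => /=; rewrite hb1 /= inordK.
  case/existsP: hch => i /andP [/eqP ai /eqP bi].
  have -> : a = inord (sp i) :> 'I_N by apply: val_inj => /=; rewrite inordK -ai.
  have -> : b = inord (yy i) :> 'I_N by apply: val_inj => /=; rewrite inordK /yy -bi.
  apply/setUP; right; apply/imsetP; exists i => //.
  rewrite inE /inU -ai -bi !ltn_ord /=.
  have -> : inord a = a :> 'I_N by apply: val_inj => /=; rewrite inordK.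
  have -> : inord b = b :> 'I_N by apply: val_inj => /=; rewrite inordK.
  by rewrite ha hb.
apply: leq_trans (leq_card_setU _ _) _; apply: leq_add; exact: leq_imset_card.
Qed.


Lemma inord_val_lt (p : nat) : p < N -> nat_of_ord (inord p : 'I_N) = p.
Proof. exact: inordK. Qed.

Lemma cover x : x \in W -> exists2 p, p \in TT & connect e x (s p).
Proof.
move=> xW.
case: (@arg_minnP _ x (connect e x) (fun z => nat_of_ord ((s^-1)%g z)) (connect0 _ _)).
move=> z0 hz0 hmin.
set p0 := (s^-1)%g z0.
have sp0 : s p0 = z0 by rewrite /p0 permKV.
have z0W : z0 \in W by rewrite -(closed_connect e_closed hz0).
exists p0; last by rewrite sp0.
rewrite !inE sp0 z0W andbT; apply/andP; split.
-
  apply/imsetP => [[i]]; rewrite !inE => /andP [hc /andP [hy1 hy2]] ep0.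
  move: hc; rewrite negb_forall => /existsP [t ht].
  have ht' : t <= yy i by have := ltn_ord t; have := sp_ge (q + pi i); rewrite /yy; lia.
  have hlt := rs_unc hy2 ht' ht.
  have hrs := rs_le (yy i).
  have hyi := yy_lt i.
  have hspi := sp_i_lt i.
  have hsl : sp i + l <= yy i by apply: sp_ltl; have := ltn_ord i; lia.
  have c1 : connect e z0 (s (inord (yy i))) by rewrite -sp0 ep0; exact: rs_conn.
  have c2 : e (s (inord (yy i))) (s (inord (sp i))).
    rewrite /e /ind_adj; move: hy1 hy2 => /andP [_ ->] /andP [_ ->] /=.
    by rewrite finset.setUC; apply: chord_edge.
  have := hmin _ (connect_trans hz0 (connect_trans c1 (connect1 c2))).
  rewrite -/p0 permK ep0 !inordK; try lia.
  rewrite /yy in hrs hyi hsl *; have := ltn_ord t; lia.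
-
  apply/negP => /andP [p0pos hprev].
  have c2 : e z0 (s (inord p0.-1)).
    rewrite /e /ind_adj z0W; move: hprev => /andP [_ ->] /=.
    rewrite -sp0 finset.setUC; have {2}-> : p0 = inord p0.-1.+1 :> 'I_N.
      by apply: val_inj => /=; rewrite inordK; have := ltn_ord p0; lia.
    apply: edge_nat; have := ltn_ord p0; lia.
  have := hmin _ (connect_trans hz0 (connect1 c2)).
  rewrite -/p0 permK inordK; have := ltn_ord p0; lia.
Qed.

Lemma comps_bound : ind_comps E W <= #|TT|.
Proof.
rewrite /ind_comps /n_comp_mem.
apply: (@leq_trans #|[set fingraph.root e (s p) | p : 'I_N in TT]|); last exact: (leq_imset_card (fun p => fingraph.root e (s p)) TT).
apply: subset_leq_card; apply/fintype.subsetP => r; rewrite !inE => /andP [hr hw].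
case: (cover hw) => p hp hc; apply/imsetP; exists p => //.
rewrite -((fingraph.rootP (sym_connect_sym e_sym)) hc).
by apply/esym/eqP; exact: hr.
Qed.


Lemma Unc_facts i : i \in Unc ->
  [/\ inU (yy i), rs (yy i) <= yy i & yy i < rs (yy i) + l].
Proof.
rewrite !inE => /andP [hc /andP [_ hy2]].
move: hc; rewrite negb_forall => /existsP [t ht].
have ht' : t <= yy i by have := ltn_ord t; have := sp_ge (q + pi i); rewrite /yy; lia.
have hlt := rs_unc hy2 ht' ht.
split => //; first exact: rs_le.
rewrite /yy in hlt *; have := ltn_ord t; lia.
Qed.

Lemma II_sub : II \subset U :\: D'.
Proof.
apply/fintype.subsetP => p /imsetP [i hi ->].
case: (Unc_facts hi) => hy hle hlt.
have hyi := yy_lt i.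
rewrite !inE -inU_ord inordK; last by lia.
rewrite (@rs_in _ (rs (yy i)) hy) ?leqnn ?hle // andbT.
by case/orP: (rs_start (yy i)) => [/eqP -> //| /negbTE ->]; rewrite andbF.
Qed.

Lemma card_II : #|II| = #|Unc|.
Proof.
apply: card_in_imset => i j hi hj /(congr1 (@nat_of_ord _)).
case: (Unc_facts hi) => _ hle1 hlt1; case: (Unc_facts hj) => _ hle2 hlt2.
have := yy_lt i; have := yy_lt j => hyi hyj.
rewrite !inordK; try lia.
move=> E12.
have : q + pi i = q + pi j.
  case: (ltngtP (q + pi i) (q + pi j)) => // h.
  - have := sp_ltl h; rewrite /yy in hle1 hlt1 hle2 hlt2 E12; lia.
  - have := sp_ltl h; rewrite /yy in hle1 hlt1 hle2 hlt2 E12; lia.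
move=> h; apply: (@perm_inj _ pi); apply: val_inj => /=; lia.
Qed.

Lemma Cv_bound : #|Cv| * l <= #|W|.
Proof.
pose f (x : 'I_q * 'I_l) := s (inord (yy x.1 - x.2)).
have : #|f @: finset.setX Cv [set: 'I_l]| <= #|W|.
  apply: subset_leq_card; apply/fintype.subsetP => z /imsetP [[i t]]; rewrite !inE /= andbT.
  move=> /andP [_ /forallP hc] ->.
  have := hc (widen_ord (leqnSn l) t); rewrite /= /inU => /andP [_ ->] //.
rewrite card_in_imset ?cardsX ?cardsT ?card_ord //.
move=> [i t] [j u]; rewrite !inE /= !andbT => /andP [_ _] /andP [_ _].
rewrite /f /= => /perm_inj /(congr1 (@nat_of_ord _)).
have := yy_lt i; have := yy_lt j => hyi hyj.
have := ltn_ord t; have := ltn_ord u => ht hu.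
have := sp_ge (q + pi i); have := sp_ge (q + pi j); rewrite -/(yy i) -/(yy j) => gi gj.
rewrite !inordK; try lia.
move=> E12.
have : q + pi i = q + pi j.
  case: (ltngtP (q + pi i) (q + pi j)) => // h.
  - have := sp_ltl h; rewrite /yy in hyi hyj gi gj E12 *; lia.
  - have := sp_ltl h; rewrite /yy in hyi hyj gi gj E12 *; lia.
move=> h.
have eij : i = j by apply: (@perm_inj _ pi); apply: val_inj => /=; lia.
subst j; congr (_, _); apply: val_inj => /=; lia.
Qed.

Lemma in_Fg_W : 0 < #|W| -> in_Fg g E W.
Proof.
move=> hW; rewrite /in_Fg.
have h1 := edges_bound; have h2 := comps_bound.
have h3 : #|TT| + #|Unc| <= #|U :\: D'|.
  rewrite /TT -(cardsID II (U :\: D')) (finset.setIidPr II_sub) card_II addnC leq_add2l //.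
have h4 := cardsID D' U.
have h5 : #|Bq| = #|Cv| + #|Unc| by rewrite /Cv /Unc cardsID.
have h6 := card_U.
have h7 : #|Cv| <= g #|W|.
  case: (posnP #|Cv|) => [->//|cpos].
  apply: Hgl => //; first exact: Cv_bound.
  by rewrite -card_U; apply: (leq_trans (subset_leq_card (finset.subsetT _))); rewrite cardsT card_ord.
lia.
Qed.

End Hered.

Lemma Egraph_hered g (Hgl : forall w c, 0 < c -> c * l <= w -> w <= N -> c <= g w)
  (s : {perm 'I_N}) (pi : {perm 'I_q}) : in_Hered_Fg g (Egraph s pi).
Proof. by apply/forallP => W; apply/implyP; apply: in_Fg_W. Qed.

Lemma count_lower g (Hgl : forall w c, 0 < c -> c * l <= w -> w <= N -> c <= g w) :
  N`! * q`! <= 2 * hered_Fg_count g N.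
Proof.
apply: leq_trans count_image _; rewrite leq_mul2l /=.
apply: subset_leq_card; apply/fintype.subsetP => G /imsetP [x _ ->].
by rewrite inE Egraph_simple Egraph_hered.
Qed.

End Constr.

Unset Implicit Arguments.

Lemma nat_facts (n G : nat) : (2 <= n)%N -> (1 <= G)%N ->
  let L := (n %/ G).+1 in let Q := (n - 2) %/ (2 * L) in
  [/\ (2 * Q * L + 2 <= n)%N, (2 * Q < G)%N, (n < L * G)%N &
      (G * n <= 2 * Q * n + G * G + 3 * G + 2 * n)%N].
Proof.
move=> hn hG L Q.
have hL : (0 < 2 * L)%N by rewrite /L; lia.
have i1 : (Q * (2 * L) <= n - 2)%N by apply: leq_trunc_div.
have i2 : (n - 2 < Q.+1 * (2 * L))%N by apply: ltn_ceil.
have i3 : ((n %/ G) * G <= n)%N by apply: leq_trunc_div.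
have i4 : (n < L * G)%N by apply: ltn_ceil.
have i5 : (L * G <= n + G)%N by rewrite /L mulSn; lia.
have q1 : (2 * Q * L + 2 <= n)%N by move: i1; rewrite mulnCA mulnA; lia.
have q2 : (2 * Q < G)%N.
  have : (2 * Q * L < G * L)%N by rewrite [(G * L)%N]mulnC; lia.
  by rewrite ltn_pmul2r //; rewrite /L.
split => //.
have h6 : (G * (n - 1) <= G * (Q.+1 * (2 * L)))%N by rewrite leq_mul2l; lia.
have h7 : (G * (Q.+1 * (2 * L)) = 2 * Q.+1 * (L * G))%N by ring.
have h8 : (2 * Q.+1 * (L * G) <= 2 * Q.+1 * (n + G))%N by rewrite leq_mul2l i5 orbT.
have h9 : (2 * Q * G <= G * G)%N by rewrite leq_mul2r ltnW // orbT.
have h10 : (G * (n - 1) = G * n - G)%N by rewrite mulnBr muln1.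
have h11 : (2 * Q.+1 * (n + G) = 2 * Q * n + 2 * Q * G + 2 * n + 2 * G)%N by ring.
lia.
Qed.

Local Open Scope classical_set_scope.
Local Open Scope ring_scope.

Section Ana.
Variable R : realType.

Lemma cvg_epsN (u : nat -> R) l :
  (forall e, 0 < e -> exists N, forall n, (N <= n)%N -> `|u n - l| <= e) ->
  u @ \oo --> l.
Proof.
move=> H; apply/cvgrPdistC_le => e he; case: (H e he) => N HN.
by exists N => // n /= hn; apply: HN.
Qed.

Lemma epsN_cvg (u : nat -> R) l : u @ \oo --> l ->
  forall e, 0 < e -> exists N, forall n, (N <= n)%N -> `|u n - l| <= e.
Proof.
move/cvgrPdistC_le => H e he; case: (H e he) => N _ HN.
by exists N => n hn; apply: HN.
Qed.

Lemma cvg_dom (u v : nat -> R) l :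
  (exists N, forall n, (N <= n)%N -> `|u n - l| <= v n) -> v @ \oo --> 0 ->
  u @ \oo --> l.
Proof.
move=> [N HN] /epsN_cvg Hv; apply: cvg_epsN => e he.
case: (Hv e he) => M HM; exists (maxn N M) => n hn.
apply: le_trans (HN n _) _; first by lia.
have := HM n; rewrite subr0 => /(_ ltac:(lia)) h.
exact: le_trans (ler_norm _) h.
Qed.

Lemma inv_nat_cvg0 (h : nat -> nat) :
  (forall M : nat, exists N : nat, forall n : nat, (N <= n)%N -> (M <= h n)%N) ->
  (fun n => ((h n)%:R : R)^-1) @ \oo --> 0.
Proof.
move=> Hh; apply: cvg_epsN => e he.
case: (Hh (Num.bound (e^-1)).+1) => N HN; exists N => n hn.
have hb := HN n hn.
have bpos : (0 < (h n)%:R :> R) by rewrite ltr0n; lia.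
rewrite subr0 ger0_norm; last by rewrite invr_ge0 ltW.
rewrite invf_ple ?posrE //.
apply: le_trans (ltW (archi_boundP _)) _; first by rewrite invr_ge0 ltW.
by rewrite ler_nat; apply: ltnW.
Qed.


Lemma inv_ln_cvg0 (h : nat -> nat) :
  (forall M : nat, exists N : nat, forall n : nat, (N <= n)%N -> (M <= h n)%N) ->
  (fun n => (ln ((h n)%:R : R))^-1) @ \oo --> 0.
Proof.
move=> Hh; apply: cvg_epsN => e he.
case: (Hh (Num.bound (expR (e^-1)))) => N HN; exists N => n hn.
have hb := HN n hn.
have hx : expR (e^-1) <= (h n)%:R :> R.
  apply: le_trans (ltW (archi_boundP _)) _; first exact: expR_ge0.
  by rewrite ler_nat.
have hpos : 0 < (h n)%:R :> R by apply: lt_le_trans hx; exact: expR_gt0.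
have hl : e^-1 <= ln ((h n)%:R : R).
  by rewrite -[X in X <= _]expRK ler_ln ?posrE ?expR_gt0.
have lpos : 0 < ln ((h n)%:R : R) by apply: lt_le_trans hl; rewrite invr_gt0.
rewrite subr0 ger0_norm; last by rewrite invr_ge0 ltW.
by rewrite invf_ple ?posrE.
Qed.

Lemma pow_fact_le (k : nat) : (k%:R : R) ^+ k <= expR k%:R * k`!%:R.
Proof.
case: k => [|k]; first by rewrite expr0 expR0 mul1r fact0.
have := @expR_ge1Dxn R k.+1%:R k (ler0n _ _).
have fpos : 0 < (k.+1)`!%:R :> R by rewrite ltr0n fact_gt0.
move=> h.
have : (k.+1%:R : R) ^+ k.+1 / (k.+1)`!%:R <= expR k.+1%:R.
  by apply: le_trans h; rewrite lerDr.
by rewrite ler_pdivrMr.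
Qed.

End Ana.
Arguments cvg_epsN {R}.
Arguments epsN_cvg {R}.
Arguments cvg_dom {R}.
Arguments inv_nat_cvg0 {R}.
Arguments inv_ln_cvg0 {R}.
Arguments pow_fact_le {R}.


Section RealB.
Variable R : realType.

Lemma a_bound (n G Q : nat) : (0 < n)%N -> (0 < G)%N -> (2 * Q < G)%N ->
  (G * n <= 2 * Q * n + G * G + 3 * G + 2 * n)%N ->
  `|2 * Q%:R / G%:R - 1| <= G%:R / n%:R + 3 * (n%:R)^-1 + 2 * (G%:R)^-1 :> R.
Proof.
move=> hn hG hQ hk.
have Gp : 0 < G%:R :> R by rewrite ltr0n.
have np : 0 < n%:R :> R by rewrite ltr0n.
have hk' : (G * n)%:R <= (2 * Q * n + G * G + 3 * G + 2 * n)%:R :> R by rewrite ler_nat.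
rewrite !natrD !natrM in hk'.
have hQ' : (2 * Q)%:R <= G%:R :> R by rewrite ler_nat ltnW.
rewrite natrM in hQ'.
have ha : 2 * Q%:R / G%:R - 1 <= 0 :> R.
  by rewrite subr_le0 ler_pdivrMr // mul1r.
rewrite ler0_norm //.
rewrite -subr_ge0.
have -> : G%:R / n%:R + 3 * (n%:R)^-1 + 2 * (G%:R)^-1 - - (2 * Q%:R / G%:R - 1) =
   (G%:R * G%:R + 3 * G%:R + 2 * n%:R + 2 * Q%:R * n%:R - G%:R * n%:R) / (G%:R * n%:R) :> R.
  by field; apply/andP; split; rewrite gt_eqF.
apply: divr_ge0; last by apply: mulr_ge0; apply: ltW.
move: hk'; rewrite [(2%:R : R)]/= => hk'.
nra.
Qed.

Lemma b_bound (Qr Gr : R) : 1 < Gr -> 0 < Qr -> Qr <= Gr -> Gr <= 4 * Qr ->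
  `|ln Qr / ln Gr - 1| <= ln 4 * (ln Gr)^-1.
Proof.
move=> hG hQ hQG hGQ.
have Gp : 0 < Gr by apply: lt_trans hG.
have lG : 0 < ln Gr by apply: ln_gt0.
have -> : ln Qr / ln Gr - 1 = (ln Qr - ln Gr) * (ln Gr)^-1 by field; rewrite gt_eqF.
rewrite normrM [`|(ln Gr)^-1|]ger0_norm; last by rewrite invr_ge0 ltW.
apply: ler_wpM2r; first by rewrite invr_ge0 ltW.
have h1 : ln Qr <= ln Gr by rewrite ler_ln ?posrE.
have h2 : ln Gr <= ln 4 + ln Qr.
  rewrite -lnM ?posrE //.
  by rewrite ler_ln ?posrE // mulr_gt0.
rewrite ler0_norm; last by rewrite subr_le0.
lra.
Qed.

End RealB.

Lemma cross_le (R : realType) (x y z u : R) : 0 < y -> 0 < u -> x / y <= z / u -> x * u <= z * y.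
Proof.
move=> yp up h.
have := ler_wpM2r (ltW (mulr_gt0 yp up)) h.
have -> : x / y * (y * u) = x * u by field; rewrite gt_eqF.
by have -> : z / u * (y * u) = z * y by field; rewrite gt_eqF.
Qed.

Lemma expR_part (R : realType) (k : nat) : (0 < k)%N ->
  expR ((k%:R : R) * ln (k%:R) - k%:R - ln 2) <= k`!%:R / 2.
Proof.
move=> kp.
have kpos : (0 : R) < k%:R by rewrite ltr0n.
have e1 : expR ((k%:R : R) * ln (k%:R) - k%:R - ln 2) =
   (k%:R : R) ^+ k / (expR k%:R * 2).
  rewrite !expRB (mulrC (k%:R : R) (ln k%:R)) expRM_natr !lnK ?posrE //.
  by rewrite invfM mulrA.
rewrite e1 ler_pdivrMr ?mulr_gt0 ?expR_gt0 //.
have -> : k`!%:R / 2 * (expR k%:R * 2) = expR k%:R * k`!%:R :> R by field.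
exact: pow_fact_le.
Qed.

Theorem lemma20 (R : realType) (g : nat -> nat) :
  (forall M : nat, exists N : nat, forall n : nat, (N <= n)%N -> (M <= g n)%N) ->
  (((g n)%:R / n%:R : R) @[n --> \oo] --> (0 : R)) ->
  (exists n0 : nat, forall m n : nat, (0 < m)%N -> (n0 <= m)%N -> (m <= n)%N ->
      (g m <= g n)%N /\ (g n)%:R / n%:R <= (g m)%:R / m%:R :> R) ->
  exists eps : nat -> R, (eps @ \oo --> (0 : R)) /\
    \forall n \near \oo,
      (n`!)%:R * ((g n)%:R `^ ((1 + eps n) * (g n)%:R / 2))
        <= (hered_Fg_count g n)%:R.
Proof.
move=> hinf hg0 [n0 hmono].
pose L n := (n %/ g n).+1.
pose Q n := ((n - 2) %/ (2 * L n))%N.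
pose Gr n : R := (g n)%:R.
pose Qr n : R := (Q n)%:R.
pose a n := 2 * Qr n / Gr n.
pose b n := ln (Qr n) / ln (Gr n).
pose c n := (ln (Gr n))^-1.
pose d n := (Gr n)^-1.
pose K := maxn 2 n0.
have [N1 H1] : exists N1, forall n, (N1 <= n)%N -> (4 <= g n)%N := hinf 4%N.
have [N2 H2] : exists N2, forall n, (N2 <= n)%N -> (g n * K <= n)%N.
  have Kp : (0 : R) < K%:R^-1 by rewrite invr_gt0 ltr0n /K; lia.
  case: (epsN_cvg _ _ hg0 _ Kp) => N HN; exists N.+1 => n hn.
  have := HN n (ltnW hn); rewrite subr0 => h.
  have h' := le_trans (ler_norm _) h.
  have np : (0:R) < n%:R by rewrite ltr0n; lia.
  have Kp' : (0:R) < K%:R by rewrite ltr0n /K; lia.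
  rewrite ler_pdivrMr // in h'.
  rewrite -(ler_nat R) natrM -ler_pdivlMr // mulrC; exact: h'.
have Hd : d @ \oo --> 0 := inv_nat_cvg0 _ hinf.
have Hc : c @ \oo --> 0 := inv_ln_cvg0 _ hinf.
have Hn : (fun n => (n%:R : R)^-1) @ \oo --> 0.
  by apply: (@inv_nat_cvg0 _ id) => M; exists M.
have Ha : a @ \oo --> (1:R).
  apply: (@cvg_dom _ _ (fun n => Gr n / n%:R + 3 * (n%:R)^-1 + 2 * d n)).
  - exists (maxn N1 2) => n hn.
    have h1 := H1 n ltac:(lia).
    have [] := @nat_facts n (g n) ltac:(lia) ltac:(lia) => _ h2 _ h4.
    by apply: a_bound => //; lia.
  - have -> : (0:R) = 0 + 3 * 0 + 2 * 0 by rewrite !mulr0 !addr0.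
    apply: cvgD; first apply: cvgD.
    + exact: hg0.
    + by apply: cvgM; [exact: cvg_cst | exact: Hn].
    + by apply: cvgM; [exact: cvg_cst | exact: Hd].
have [N3 H3] : exists N3, forall n, (N3 <= n)%N -> 1/2 <= a n.
  have hp : (0:R) < 1/2 by [].
  case: (epsN_cvg _ _ Ha _ hp) => N HN; exists N => n hn; have := HN n hn.
  by rewrite ler_distlC => /andP [_ h]; lra.
pose N0 := maxn (maxn N1 N2) (maxn N3 2).
have facts : forall n, (N0 <= n)%N ->
   [/\ (4 <= g n)%N, (g n * K <= n)%N, (2 <= n)%N, 4 <= Gr n &
       [/\ Gr n <= 4 * Qr n, 0 < Qr n, Qr n <= Gr n, (2 * Q n * L n + 2 <= n)%N &
           [/\ (2 * Q n < g n)%N & (n < L n * g n)%N]]].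
  move=> n hn.
  have h1 := H1 n ltac:(lia); have h2 := H2 n ltac:(lia); have h3 := H3 n ltac:(lia).
  have [] := @nat_facts n (g n) ltac:(lia) ltac:(lia) => f1 f2 f3 _.
  have f1' : (2 * Q n * L n + 2 <= n)%N := f1.
  have f2' : (2 * Q n < g n)%N := f2.
  have f3' : (n < L n * g n)%N := f3.
  have G4 : 4 <= Gr n by rewrite /Gr (ler_nat R 4).
  have Gp : 0 < Gr n by apply: lt_le_trans G4.
  have G4Q : Gr n <= 4 * Qr n.
    move: h3; rewrite /a ler_pdivlMr // => h3; lra.
  have QG : Qr n <= Gr n by rewrite /Qr /Gr ler_nat; lia.
  split => //; first by lia.
  split => //; first lra.
have Hb : b @ \oo --> (1:R).
  apply: (@cvg_dom _ _ (fun n => ln 4 * c n)).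
  - exists N0 => n hn; have [_ _ _ G4 [G4Q Qp QG _ _]] := facts n hn.
    by apply: b_bound => //; lra.
  - have -> : (0:R) = ln 4 * 0 by rewrite mulr0.
    by apply: cvgM; [exact: cvg_cst | exact: Hc].
exists (fun n => a n * b n - a n * c n - 2 * ln 2 * (d n * c n) - 1); split.
  have H : (fun n => a n * b n - a n * c n - 2 * ln 2 * (d n * c n) - 1) @ \oo -->
       (1 * 1 - 1 * 0 - 2 * ln 2 * (0 * 0) - 1 : R).
    apply: cvgB; last exact: cvg_cst.
    apply: cvgB; first apply: cvgB.
    + by apply: cvgM.
    + by apply: cvgM.
    + by apply: cvgM; [exact: cvg_cst | apply: cvgM].
  by move: H; rewrite !mulr1 !mul0r !mulr0 !subr0 subrr.
exists N0 => // n /= hn.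
have [h1 h2 h2n G4 [G4Q Qp QG f1 [f2 f3]]] := facts n hn.
have gp : (0 < g n)%N by lia.
have hK : (K <= n %/ g n)%N by rewrite leq_divRL //; lia.
have hK' : (2 <= n %/ g n)%N /\ (n0 <= n %/ g n)%N by move: hK; rewrite /K; lia.
have Ldef : L n = (n %/ g n).+1 := erefl.
have Hgl : forall w c0, (0 < c0)%N -> (c0 * L n <= w)%N -> (w <= n)%N -> (c0 <= g w)%N.
  move=> w c0 c0p hw wn.
  have wL : (L n <= w)%N by apply: leq_trans hw; rewrite leq_pmull.
  have w0 : (n0 <= w)%N by lia.
  have [_ hr] := hmono w n ltac:(lia) w0 wn.
  have np : (0:R) < n%:R by rewrite ltr0n; lia.
  have wp : (0:R) < w%:R by rewrite ltr0n; lia.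
  have := @cross_le R _ _ _ _ np wp hr.
  rewrite -!natrM ler_nat => hx.
  have s1 : (c0 * n <= c0 * (L n * g n))%N by rewrite leq_mul2l ltnW ?orbT.
  have s2 : (c0 * (L n * g n) = (c0 * L n) * g n)%N by rewrite mulnA.
  have s3 : ((c0 * L n) * g n <= w * g n)%N by rewrite leq_mul2r hw orbT.
  have s4 : (c0 * n <= g w * n)%N by rewrite mulnC in hx; lia.
  by rewrite leq_pmul2r in s4; lia.
have hc : (n.-1.+1`! * (Q n)`! <= 2 * hered_Fg_count g n.-1.+1)%N.
  apply: (@count_lower n.-1 (L n) (Q n)); rewrite ?prednK //; try lia.
rewrite prednK in hc; last by lia.
have Gpos : 0 < Gr n by lra.
have lnpos : 0 < ln (Gr n) by apply: ln_gt0; lra.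
have Hx : (1 + (a n * b n - a n * c n - 2 * ln 2 * (d n * c n) - 1)) *
      (g n)%:R / 2 * ln ((g n)%:R) = Qr n * ln (Qr n) - Qr n - ln 2.
  rewrite /a /b /c /d -/(Gr n); field.
  by apply/andP; split; rewrite gt_eqF.
rewrite /powR gt_eqF; last exact: Gpos.
rewrite Hx.
have Qp' : (0 < Q n)%N by move: Qp; rewrite /Qr ltr0n.
have := @expR_part R (Q n) Qp'.
rewrite -/(Qr n) => hE.
have nf : (0:R) <= n`!%:R by [].
apply: le_trans (ler_wpM2l nf hE) _.
have hc' : (n`! * (Q n)`!)%:R <= (2 * hered_Fg_count g n)%:R :> R by rewrite ler_nat.
rewrite natrM natrM in hc'.
rewrite mulrA ler_pdivrMr //.
by rewrite [X in _ <= X]mulrC.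
Qed.
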